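(* Assume $K=o(\sqrt n)$, $\mathbb{E}_0(X_\Gamma)=\omega(1)$ and $\mathbb{E}_0(L^2)=1+o(1)$. Then every estimator $\hat{\mathcal K}$ of the planted set $\mathcal K$ satisfies $\mathrm{ov}(\hat{\mathcal K})=o(K)$.
   Context: Model: $n$ nodes; $\lambda>0$ fixed; $\Gamma$ a fixed graph on $K$ vertices. $\mathbb{P}_0$: $G\sim\mathcal G(n,\lambda/n)$. $\mathbb{P}_1$: $G=G_0\cup G'$, $G_0\sim\mathcal G(n,\lambda/n)$, $G'$ the image of $\Gamma$ under a uniformly random injection $\sigma$ of its vertices into $[n]$ independent of $G_0$; $\mathcal K$ is the image of $\sigma$. $X_\Gamma$ is the number of copies of $\Gamma$ in $G$ (subgraphs of $G$ isomorphic to $\Gamma$), $L=L(G)=\mathbb{P}_1(G)/\mathbb{P}_0(G)$ the likelihood ratio, and $\mathbb{E}_0$ expectation under $\mathbb{P}_0$. An estimator is a set $\hat{\mathcal K}$ of $K$ nodes computed from $G$; its overlap is $\mathrm{ov}(\hat{\mathcal K})=\sum_{i\in[n]}\mathbb{P}_1(i\in\hat{\mathcal K}\cap\mathcal K)$. Asymptotics as $n\to\infty$. *)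

(* Defs.v *)
From HB Require Import structures.
From mathcomp Require Import all_boot all_order all_algebra.
From mathcomp Require Import all_classical all_reals all_analysis.
Set Implicit Arguments. Unset Strict Implicit. Unset Printing Implicit Defensive.
Import Order.TTheory GRing.Theory Num.Theory.
Local Open Scope ring_scope.

(* A (simple) graph on vertex set 'I_n is its edge set: a set of 2-element
   subsets of 'I_n.  The type of all candidate graphs is {set {set 'I_n}};
   P0 gives probability 0 to those that are not edge sets. *)
Definition edges (n : nat) : {set {set 'I_n}} := [set e : {set 'I_n} | #|e| == 2%N].

Definition is_graph (n : nat) (G : {set {set 'I_n}}) : bool := G \subset edges n.

Section Model.
Variable R : realType.

(* edge probability lambda/n (clamped to 1 for the finitely many small n) *)
Definition pn (lam : R) (n : nat) : R := Num.min (lam / n%:R) 1.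

Definition P0 (lam : R) (n : nat) (G : {set {set 'I_n}}) : R :=
  if is_graph G then pn lam n ^+ #|G| * (1 - pn lam n) ^+ ('C(n, 2) - #|G|)
  else 0.

Definition imgraph (K n : nat) (s : 'I_K -> 'I_n) (Ga : {set {set 'I_K}})
  : {set {set 'I_n}} := [set s @: e | e : {set 'I_K} in Ga].

Definition ninj (K n : nat) : R :=
  (#|[set s : {ffun 'I_K -> 'I_n} | injectiveb s]|)%:R.

(* P1 : G = G0 \cup sigma(Gamma), sigma a uniform injection independent of G0 *)
Definition P1 (lam : R) (n K : nat) (Ga : {set {set 'I_K}})
  (G : {set {set 'I_n}}) : R :=
  (ninj K n)^-1 * \sum_(s : {ffun 'I_K -> 'I_n} | injectiveb s)
     \sum_(G0 : {set {set 'I_n}} | G0 :|: imgraph s Ga == G) P0 lam G0.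

Definition is_copy (K n : nat) (Ga : {set {set 'I_K}})
  (VE : ({set 'I_n} * {set {set 'I_n}})%type) : bool :=
  [exists s : {ffun 'I_K -> 'I_n},
     [&& injectiveb s, VE.1 == s @: setT & VE.2 == imgraph s Ga]].

Definition XGamma (K n : nat) (Ga : {set {set 'I_K}}) (G : {set {set 'I_n}})
  : nat :=
  #|[set VE : ({set 'I_n} * {set {set 'I_n}})%type
       | (VE.2 \subset G) && is_copy Ga VE]|.

Definition EX0 (lam : R) (n K : nat) (Ga : {set {set 'I_K}}) : R :=
  \sum_(G : {set {set 'I_n}}) P0 lam G * (XGamma Ga G)%:R.

Definition LR (lam : R) (n K : nat) (Ga : {set {set 'I_K}})
  (G : {set {set 'I_n}}) : R := P1 lam Ga G / P0 lam G.

Definition EL2 (lam : R) (n K : nat) (Ga : {set {set 'I_K}}) : R :=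
  \sum_(G : {set {set 'I_n}}) P0 lam G * (LR lam Ga G) ^+ 2.

(* overlap of an estimator est : graph -> set of nodes:
   sum_i P1(i in est(G) \cap K) = E_1 |est(G) \cap image(sigma)| *)
Definition overlap (lam : R) (n K : nat) (Ga : {set {set 'I_K}})
  (est : {set {set 'I_n}} -> {set 'I_n}) : R :=
  (ninj K n)^-1 * \sum_(s : {ffun 'I_K -> 'I_n} | injectiveb s)
     \sum_(G0 : {set {set 'I_n}})
        P0 lam G0 * (#|est (G0 :|: imgraph s Ga) :&: s @: setT|)%:R.

End Model.

(* Main.v *)
Require Import Defs.
From HB Require Import structures.
From mathcomp Require Import all_boot all_order all_algebra.
From mathcomp Require Import all_classical all_reals all_analysis.
From mathcomp Require Import zify ring lra.
From mathcomp Require Import fingroup perm.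
Import Order.TTheory GRing.Theory Num.Theory numFieldNormedType.Exports.
Local Open Scope ring_scope.
Set Implicit Arguments. Unset Strict Implicit. Unset Printing Implicit Defensive.

Ltac bsolve := intros; simpl in *; repeat match goal with
 | H : is_true true -> _ |- _ => specialize (H isT)
 | H : is_true false |- _ => discriminate H
 | H : false = true |- _ => discriminate H
 end; simpl in *; try done.

Section Binom.
Variable R : realType.

Lemma sum_subset_binom (T : finType) (A : {set T}) (x y : R) :
  \sum_(S : {set T} | S \subset A) x ^+ #|S| * y ^+ #|A :\: S| = (x + y) ^+ #|A|.
Proof.
pose F i := if i \in A then x else 0.
pose G i := if i \in A then y else 1.
have := @bigA_distr R 0 1 *%R +%R _ F G.
have -> : \prod_i (F i + G i) = (x+y)^+#|A|.
  rewrite /= (bigID (mem A)) /= [X in _ * X]big1 ?mulr1; last first.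
    by move=> i /negbTE; rewrite /F /G => ->; rewrite add0r.
  rewrite -prodr_const; apply: eq_bigr => i iA; by rewrite /F /G iA.
move=> ->; rewrite /= [RHS](bigID (fun S : {set T} => S \subset A)) /=.
rewrite [X in _ = _ + X]big1 ?addr0; last first.
  move=> S /subsetPn [i iS iA].
  by rewrite (bigD1 i) //= iS /F (negbTE iA) mul0r.
apply: eq_bigr => S SA.
rewrite (bigID (mem S)) /=; congr (_ * _).
  rewrite -prodr_const; apply: eq_bigr => i iS; by rewrite iS /F (fintype.subsetP SA).
rewrite -prodr_const [RHS](bigID (mem A)) /= [X in _ = _ * X]big1 ?mulr1; last first.
  by move=> i /andP[/negbTE -> /negbTE iA]; rewrite /G iA.
apply: eq_big; first by move=> i; rewrite !inE.
by move=> i; rewrite !inE => /andP [/negbTE -> iA]; rewrite /G iA.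
Qed.
End Binom.

Section Model2.
Variable R : realType.
Variables (lam : R) (n : nat).
Let p := pn lam n.
Hypotheses (p0 : 0 < p) (p1 : p <= 1).
Let E := edges n.

Lemma card_edges : #|E| = 'C(n, 2).
Proof. by rewrite /E /edges card_draws card_ord. Qed.

Lemma P0E (G : {set {set 'I_n}}) :
  P0 lam G = if G \subset E then p ^+ #|G| * (1 - p) ^+ #|E :\: G| else 0.
Proof.
rewrite /P0 /is_graph -/E; case: ifP => // GE.
by rewrite cardsD (finset.setIidPr GE) card_edges.
Qed.

Lemma P0_ge0 (G : {set {set 'I_n}}) : 0 <= P0 lam G.
Proof.
rewrite P0E; case: ifP => // _; apply: mulr_ge0; apply: exprn_ge0 => //.
  exact: ltW. by rewrite subr_ge0.
Qed.

Lemma sumP0 : \sum_(G : {set {set 'I_n}}) P0 lam G = 1.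
Proof.
rewrite (eq_bigr (fun G : {set {set 'I_n}} => if G \subset E then p ^+ #|G| * (1 - p) ^+ #|E :\: G| else 0));
  last by move=> G _; rewrite P0E.
by rewrite -big_mkcond sum_subset_binom addrC subrK expr1n.
Qed.

Lemma Qform (H G : {set {set 'I_n}}) : H \subset E ->
  \sum_(G0 | G0 :|: H == G) P0 lam G0 = (H \subset G)%:R * P0 lam G / p ^+ #|H|.
Proof.
move=> HE.
have [HG|nHG] := boolP (H \subset G); last first.
  rewrite big_pred0 ?mul0r // => G0; apply/negP => /eqP e.
  by move: nHG; rewrite -e finset.subsetUr.
rewrite mul1r.
rewrite (reindex_onto (fun S => (G :\: H) :|: S) (fun G0 => G0 :&: H)); last first.
  move=> G0 /eqP e; apply/setP => x; move/setP: e => /(_ x); rewrite !inE.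
  by case: (x \in G0); case: (x \in H); case: (x \in G).
rewrite (eq_bigl (fun S : {set {set 'I_n}} => S \subset H)); last first.
  move=> S; apply/idP/idP.
    move=> /andP [_ /eqP <-]; exact: finset.subsetIr.
  move=> SH; apply/andP; split; apply/eqP/setP => x; rewrite !inE;
    move: (fintype.subsetP SH x) (fintype.subsetP HG x);
    by case: (x \in S); case: (x \in H); case: (x \in G); bsolve.
have [GE|nGE] := boolP (G \subset E); last first.
  rewrite P0E (negbTE nGE) mul0r big1 // => S SH; rewrite P0E.
  case: ifP => // G0E; case/negP: nGE; apply/fintype.subsetP => x xG.
  have [xH|xH] := boolP (x \in H); first exact: (fintype.subsetP HE).
  by apply: (fintype.subsetP G0E); rewrite !inE xH xG.
pose c := p ^+ #|G :\: H| * (1 - p) ^+ #|E :\: G|.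
transitivity (\sum_(S : {set {set 'I_n}} | S \subset H) c * (p ^+ #|S| * (1 - p) ^+ #|H :\: S|)).
  apply: eq_bigr => S SH; rewrite P0E.
  have G0E : (G :\: H) :|: S \subset E.
    apply/fintype.subsetP => x /setUP [/setDP [xG _]|xS].
      exact: (fintype.subsetP GE).
    by apply: (fintype.subsetP HE); apply: (fintype.subsetP SH).
  have e1 : ((G :\: H) :|: S) :&: H = S.
    apply/setP => x; rewrite !inE; move: (fintype.subsetP SH x).
    by case: (x \in S); case: (x \in H); case: (x \in G); bsolve.
  have e2 : ((G :\: H) :|: S) :\: H = G :\: H.
    apply/setP => x; rewrite !inE; move: (fintype.subsetP SH x).
    by case: (x \in S); case: (x \in H); case: (x \in G); bsolve.
  have h1 := cardsID ((G :\: H) :|: S) E.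
  rewrite (finset.setIidPr G0E) in h1.
  have h2 := cardsID G E; rewrite (finset.setIidPr GE) in h2.
  have h3 := cardsID H G; rewrite (finset.setIidPr HG) in h3.
  have h4 := cardsID S H; rewrite (finset.setIidPr SH) in h4.
  have h5 := cardsID H ((G :\: H) :|: S).
  rewrite e1 e2 in h5.
  rewrite G0E /c mulrACA -!exprD; congr (_ ^+ _ * _ ^+ _); lia.
rewrite -mulr_sumr sum_subset_binom addrC subrK expr1n mulr1 P0E GE /c.
have h3 := cardsID H G; rewrite (finset.setIidPr HG) in h3.
rewrite -h3 exprD [RHS]mulrC !mulrA mulVf ?mul1r // expf_neq0 //; exact: lt0r_neq0.
Qed.

Lemma sum_union (H : {set {set 'I_n}}) (F : {set {set 'I_n}} -> {set {set 'I_n}} -> R) :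
  \sum_G0 F G0 (G0 :|: H) = \sum_G \sum_(G0 | G0 :|: H == G) F G0 G.
Proof.
rewrite (partition_big (fun G0 => G0 :|: H) xpredT) //=.
by apply: eq_bigr => G _; apply: eq_bigr => G0 /eqP ->.
Qed.

Lemma sum_sub (H : {set {set 'I_n}}) : H \subset E ->
  \sum_G P0 lam G * (H \subset G)%:R = p ^+ #|H|.
Proof.
move=> HE.
have hp : p ^+ #|H| != 0 by rewrite expf_neq0 // lt0r_neq0.
have e : \sum_(G : {set {set 'I_n}}) (H \subset G)%:R * P0 lam G / p ^+ #|H| = 1.
  rewrite -[RHS]sumP0 (sum_union H (fun G0 _ => P0 lam G0)); apply: eq_bigr => G _.
  by rewrite Qform.
apply: (mulIf (invr_neq0 hp)); rewrite mulfV // -[RHS]e mulr_suml.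
by apply: eq_bigr => G _; rewrite [P0 lam G * _]mulrC.
Qed.

Variables (K : nat) (Ga : {set {set 'I_K}}).
Hypothesis Gag : is_graph Ga.

Definition Hs (s : {ffun 'I_K -> 'I_n}) := imgraph s Ga.
Definition Vs (s : {ffun 'I_K -> 'I_n}) : {set 'I_n} := s @: setT.
Definition ell (s : {ffun 'I_K -> 'I_n}) (G : {set {set 'I_n}}) : R :=
  (Hs s \subset G)%:R / p ^+ #|Hs s|.
Let N := ninj R K n.

Lemma Hs_graph (s : {ffun 'I_K -> 'I_n}) : injectiveb s -> Hs s \subset E.
Proof.
move=> /injectiveP inj; apply/fintype.subsetP => e /imsetP [e0 e0Ga ->].
have := fintype.subsetP Gag e0 e0Ga; rewrite !inE card_imset //.
Qed.

Lemma card_Vs (s : {ffun 'I_K -> 'I_n}) : injectiveb s -> #|Vs s| = K.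
Proof.
move=> /injectiveP inj; rewrite card_imset // -[RHS](card_ord K).
by apply: eq_card => x; rewrite in_setT.
Qed.

Lemma P1E (G : {set {set 'I_n}}) :
  P1 lam Ga G = P0 lam G * (N^-1 * \sum_(s : {ffun 'I_K -> 'I_n} | injectiveb s) ell s G).
Proof.
rewrite /P1 -/N mulrCA; congr (_ * _); rewrite mulr_sumr; apply: eq_bigr => s si.
rewrite Qform; last exact: Hs_graph.
by rewrite /ell -mulrA mulrCA.
Qed.

Definition Lf (G : {set {set 'I_n}}) : R :=
  N^-1 * \sum_(s : {ffun 'I_K -> 'I_n} | injectiveb s) ell s G.
Definition Li (G : {set {set 'I_n}}) (i : 'I_n) : R :=
  N^-1 * \sum_(s : {ffun 'I_K -> 'I_n} | injectiveb s) ell s G * (i \in Vs s)%:R.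

Lemma EL2E : EL2 lam n Ga = \sum_(G : {set {set 'I_n}}) P0 lam G * Lf G ^+ 2.
Proof.
apply: eq_bigr => G _; rewrite /LR P1E -/(Lf G).
have [->|h] := eqVneq (P0 lam G) 0; first by rewrite !mul0r.
by rewrite [_ * _ / _]mulrC mulKf.
Qed.

Lemma cardIR (A B : {set 'I_n}) : (#|A :&: B|)%:R = \sum_(i in A) (i \in B)%:R :> R.
Proof.
rewrite -sum1_card natr_sum big_mkcond [RHS]big_mkcond; apply: eq_bigr => i _.
by rewrite inE; case: (i \in A); case: (i \in B).
Qed.

Lemma overlapE (est : {set {set 'I_n}} -> {set 'I_n}) :
  overlap lam Ga est = \sum_(G : {set {set 'I_n}}) P0 lam G * \sum_(i in est G) Li G i.
Proof.
rewrite /overlap -/N.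
transitivity (N^-1 * \sum_(s : {ffun 'I_K -> 'I_n} | injectiveb s)
   \sum_(G : {set {set 'I_n}}) ell s G * P0 lam G * \sum_(i in est G) (i \in Vs s)%:R).
  congr (_ * _); apply: eq_bigr => s si.
  rewrite (sum_union (Hs s) (fun G0 G => P0 lam G0 * (#|est G :&: Vs s|)%:R)).
  apply: eq_bigr => G _; rewrite -mulr_suml Qform; last exact: Hs_graph.
  by rewrite cardIR /ell [_ * P0 lam G * _]mulrAC.
rewrite mulr_sumr; under eq_bigr do rewrite mulr_sumr.
rewrite exchange_big /=; apply: eq_bigr => G _.
rewrite /Li mulr_sumr.
under [in RHS]eq_bigr => i _ do rewrite mulrA mulr_sumr.
rewrite [RHS]exchange_big /=; apply: eq_bigr => s si.
rewrite !mulrA mulr_sumr; apply: eq_bigr => i _; rewrite /ell; ring.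
Qed.

Definition W (s s' : {ffun 'I_K -> 'I_n}) : R :=
  \sum_(G : {set {set 'I_n}}) P0 lam G * (ell s G * ell s' G).

Lemma W_ge1 (s s' : {ffun 'I_K -> 'I_n}) : injectiveb s -> injectiveb s' -> 1 <= W s s'.
Proof.
move=> si si'.
have hE : Hs s :|: Hs s' \subset E by rewrite finset.subUset !Hs_graph.
have hpos : 0 < p ^+ #|Hs s| * p ^+ #|Hs s'| by rewrite mulr_gt0 // exprn_gt0.
have -> : W s s' = p ^+ #|Hs s :|: Hs s'| / (p ^+ #|Hs s| * p ^+ #|Hs s'|).
  rewrite -(sum_sub hE) mulr_suml; apply: eq_bigr => G _.
  rewrite /ell finset.subUset; case: (Hs s \subset G); case: (Hs s' \subset G);
    by rewrite /= invfM; ring.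
rewrite ler_pdivlMr // mul1r -exprD; apply: ler_wiXn2l => //; first exact: ltW.
by rewrite cardsU leq_subr.
Qed.

Lemma swap3 (c : R) (f : {set {set 'I_n}} -> {ffun 'I_K -> 'I_n} -> {ffun 'I_K -> 'I_n} -> R) :
  \sum_(G : {set {set 'I_n}}) P0 lam G * (c * \sum_(s : {ffun 'I_K -> 'I_n} | injectiveb s)
      \sum_(s' : {ffun 'I_K -> 'I_n} | injectiveb s') f G s s') =
  c * \sum_(s : {ffun 'I_K -> 'I_n} | injectiveb s) \sum_(s' : {ffun 'I_K -> 'I_n} | injectiveb s')
      \sum_(G : {set {set 'I_n}}) P0 lam G * f G s s'.
Proof.
under eq_bigr => G _ do rewrite mulrA mulr_sumr.
rewrite exchange_big /= mulr_sumr; apply: eq_bigr => s si.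
under eq_bigr => G _ do rewrite mulr_sumr.
rewrite exchange_big /= mulr_sumr; apply: eq_bigr => s' si'.
rewrite mulr_sumr; apply: eq_bigr => G _; ring.
Qed.

Lemma EL2W : EL2 lam n Ga = N^-1 * N^-1 * \sum_(s : {ffun 'I_K -> 'I_n} | injectiveb s)
      \sum_(s' : {ffun 'I_K -> 'I_n} | injectiveb s') W s s'.
Proof.
rewrite EL2E -(swap3 _ (fun G s s' => ell s G * ell s' G)).
apply: eq_bigr => G _; congr (_ * _).
by rewrite /Lf expr2 mulrACA big_distrlr.
Qed.

Definition mm (s s' : {ffun 'I_K -> 'I_n}) : R :=
  \sum_(i : 'I_n) (i \in Vs s)%:R * (i \in Vs s')%:R.

Lemma Li2W : \sum_(G : {set {set 'I_n}}) P0 lam G * \sum_(i : 'I_n) Li G i ^+ 2 =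
  N^-1 * N^-1 * \sum_(s : {ffun 'I_K -> 'I_n} | injectiveb s)
      \sum_(s' : {ffun 'I_K -> 'I_n} | injectiveb s') W s s' * mm s s'.
Proof.
have -> : \sum_(s : {ffun 'I_K -> 'I_n} | injectiveb s)
      \sum_(s' : {ffun 'I_K -> 'I_n} | injectiveb s') W s s' * mm s s' =
  \sum_(s : {ffun 'I_K -> 'I_n} | injectiveb s)
      \sum_(s' : {ffun 'I_K -> 'I_n} | injectiveb s')
      \sum_(G : {set {set 'I_n}}) P0 lam G * (ell s G * ell s' G * mm s s').
  apply: eq_bigr => s _; apply: eq_bigr => s' _; rewrite /W mulr_suml.
  by apply: eq_bigr => G _; rewrite -mulrA.
rewrite -swap3; apply: eq_bigr => G _; congr (_ * _).
under eq_bigr do rewrite /Li expr2 mulrACA big_distrlr.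
rewrite -mulr_sumr; congr (_ * _).
rewrite exchange_big; apply: eq_bigr => s si /=.
rewrite exchange_big; apply: eq_bigr => s' si' /=.
rewrite /mm mulr_sumr; apply: eq_bigr => i _; ring.
Qed.

Lemma memVs (s : {ffun 'I_K -> 'I_n}) x : (x \in Vs s) = [exists k, s k == x].
Proof.
apply/imsetP/existsP => [[k _ ->]|[k /eqP <-]]; first by exists k.
by exists k => //; rewrite in_setT.
Qed.

Lemma sumN (c : R) : \sum_(s : {ffun 'I_K -> 'I_n} | injectiveb s) c = c * N.
Proof. by rewrite sumr_const /N /ninj cardsE mulr_natr. Qed.

Lemma f_const i j :
  \sum_(s : {ffun 'I_K -> 'I_n} | injectiveb s) (i \in Vs s)%:R =
  \sum_(s : {ffun 'I_K -> 'I_n} | injectiveb s) (j \in Vs s)%:R :> R.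
Proof.
pose h (s : {ffun 'I_K -> 'I_n}) : {ffun 'I_K -> 'I_n} := [ffun k => tperm i j (s k)].
have hK : involutive h by move=> s; apply/ffunP => k; rewrite !ffunE tpermK.
rewrite (reindex_inj (inv_inj hK)) /=; apply: eq_big => s.
  apply/injectiveP/injectiveP => Hi x y e.
    by apply: Hi; rewrite !ffunE e.
  by apply: Hi; move: e; rewrite !ffunE => /perm_inj.
move=> _; congr ((_ : bool)%:R); rewrite !memVs; apply: eq_existsb => k.
by rewrite ffunE (canF_eq (tpermK i j)) tpermL.
Qed.

Lemma sum_f : \sum_(i : 'I_n) \sum_(s : {ffun 'I_K -> 'I_n} | injectiveb s) (i \in Vs s)%:R
   = K%:R * N.
Proof.
rewrite exchange_big /= -sumN; apply: eq_bigr => s si.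
rewrite -(card_Vs si) -sum1_card natr_sum [RHS]big_mkcond; apply: eq_bigr => i _.
by case: (i \in Vs s).
Qed.

Lemma sum_mm : (0 < n)%N ->
  \sum_(s : {ffun 'I_K -> 'I_n} | injectiveb s)
      \sum_(s' : {ffun 'I_K -> 'I_n} | injectiveb s') mm s s' = (K%:R * N) ^+ 2 / n%:R.
Proof.
move=> n0; pose i0 : 'I_n := Ordinal n0.
pose f := \sum_(s : {ffun 'I_K -> 'I_n} | injectiveb s) (i0 \in Vs s)%:R : R.
have hf : n%:R * f = K%:R * N.
  rewrite -sum_f; transitivity (\sum_(i : 'I_n) f).
    by rewrite sumr_const card_ord mulr_natl.
  by apply: eq_bigr => i _; rewrite /f (f_const i0 i).
have -> : \sum_(s : {ffun 'I_K -> 'I_n} | injectiveb s)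
      \sum_(s' : {ffun 'I_K -> 'I_n} | injectiveb s') mm s s' = n%:R * f ^+ 2.
  rewrite /mm.
  under eq_bigr do rewrite exchange_big /=.
  rewrite exchange_big /=.
  transitivity (\sum_(i : 'I_n) f ^+ 2); last by rewrite sumr_const card_ord mulr_natl.
  apply: eq_bigr => i _.
rewrite expr2 /f (f_const i0 i) big_distrlr /=.
by apply: eq_bigr => s _.
have nz : n%:R != 0 :> R by rewrite pnatr_eq0 -lt0n.
rewrite -hf; field; done.
Qed.

Lemma mm_le (s s' : {ffun 'I_K -> 'I_n}) : injectiveb s -> mm s s' <= K%:R.
Proof.
move=> si; rewrite -(card_Vs si) -sum1_card natr_sum [X in _ <= X]big_mkcond /mm.
apply: ler_sum => i _.
by case: (i \in Vs s); case: (i \in Vs s'); rewrite /= ?mul1r ?mulr1 ?mul0r ?mulr0.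
Qed.

Lemma mm_ge0 (s s' : {ffun 'I_K -> 'I_n}) : 0 <= mm s s'.
Proof. by apply: sumr_ge0 => i _; apply: mulr_ge0; apply: ler0n. Qed.

Lemma AMGM (x t : R) : 0 < t -> x <= t / 2 + (2 * t)^-1 * x ^+ 2.
Proof.
move=> t0; rewrite -subr_ge0.
have -> : t / 2 + (2 * t)^-1 * x ^+ 2 - x = (x - t) ^+ 2 / (2 * t).
  by field; rewrite lt0r_neq0.
by apply: divr_ge0; [apply: sqr_ge0 | rewrite mulr_ge0 // ltW].
Qed.

Lemma bound (est : {set {set 'I_n}} -> {set 'I_n}) (hest : forall G, #|est G| = K)
  (t : R) (t0 : 0 < t) (n0 : (0 < n)%N) (N0 : N != 0) :
  overlap lam Ga est <= K%:R * t / 2 + (2 * t)^-1 * (K%:R ^+ 2 / n%:R + K%:R * (EL2 lam n Ga - 1)).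
Proof.
have c0 : 0 <= (2 * t)^-1 by rewrite invr_ge0 mulr_ge0 // ltW.
rewrite overlapE.
apply: (@le_trans _ _ (\sum_(G : {set {set 'I_n}}) P0 lam G *
   (K%:R * t / 2 + (2 * t)^-1 * \sum_(i : 'I_n) Li G i ^+ 2))).
  apply: ler_sum => G _; apply: ler_wpM2l; first exact: P0_ge0.
  apply: (@le_trans _ _ (\sum_(i in est G) (t / 2 + (2 * t)^-1 * Li G i ^+ 2))).
    by apply: ler_sum => i _; apply: AMGM.
  rewrite big_split /= sumr_const hest -mulr_sumr -[_ *+ K]mulr_natl mulrA lerD2l.
  apply: ler_wpM2l => //.
  rewrite [X in _ <= X](bigID (mem (est G))) /= lerDl.
  by apply: sumr_ge0 => i _; apply: sqr_ge0.
under eq_bigr do rewrite mulrDr.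
rewrite big_split /= -mulr_suml sumP0 mul1r lerD2l.
under eq_bigr do rewrite mulrCA.
rewrite -mulr_sumr; apply: ler_wpM2l => //.
rewrite Li2W EL2W.
apply: (@le_trans _ _ (N^-1 * N^-1 * \sum_(s : {ffun 'I_K -> 'I_n} | injectiveb s)
      \sum_(s' : {ffun 'I_K -> 'I_n} | injectiveb s') (mm s s' + K%:R * (W s s' - 1)))).
  apply: ler_wpM2l; first by rewrite mulr_ge0 // invr_ge0 ler0n.
  apply: ler_sum => s si; apply: ler_sum => s' si'.
  have h1 := W_ge1 si si'; have h2 := @mm_le s s' si; have h3 := mm_ge0 s s'.
  rewrite -subr_ge0.
  have -> : mm s s' + K%:R * (W s s' - 1) - W s s' * mm s s' = (W s s' - 1) * (K%:R - mm s s').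
    by ring.
  by apply: mulr_ge0; rewrite subr_ge0.
rewrite le_eqVlt; apply/orP; left; apply/eqP.
under eq_bigr do rewrite big_split /=.
rewrite big_split /= sum_mm //.
under eq_bigr do rewrite -mulr_sumr sumrB sumN.
rewrite -mulr_sumr sumrB sumN.
rewrite /N in N0 *.
field.
by rewrite N0 pnatr_eq0 -lt0n n0.
Qed.

End Model2.

Lemma pn_pos (R : realType) (lam : R) n : 0 < lam -> (0 < n)%N -> 0 < pn lam n.
Proof. by move=> l0 n0; rewrite /pn lt_min ltr01 andbT divr_gt0 // ltr0n. Qed.

Lemma pn_le1 (R : realType) (lam : R) n : pn lam n <= 1.
Proof. by rewrite /pn ge_min lexx orbT. Qed.

Lemma overlap_ge0 (R : realType) (lam : R) n K (Ga : {set {set 'I_K}})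
  (est : {set {set 'I_n}} -> {set 'I_n}) :
  0 < lam -> (0 < n)%N -> 0 <= overlap lam Ga est :> R.
Proof.
move=> l0 n0; apply: mulr_ge0; first by rewrite invr_ge0 ler0n.
apply: sumr_ge0 => s _; apply: sumr_ge0 => G _; apply: mulr_ge0 => //.
apply: P0_ge0; [exact: pn_pos | exact: pn_le1].
Qed.
Unset Implicit Arguments.
Local Open Scope classical_set_scope.
Local Open Scope ring_scope.
Theorem theorem5 (R : realType) (lam : R) (K : nat -> nat)
  (Ga : forall n : nat, {set {set 'I_(K n)}}) :
  0 < lam ->
  (forall n, is_graph (Ga n)) ->
  ((fun n => (K n)%:R / Num.sqrt (n%:R : R)) @ \oo --> (0 : R)) ->
  ((fun n => EX0 lam n (Ga n)) @ \oo --> +oo) ->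
  ((fun n => EL2 lam n (Ga n)) @ \oo --> (1 : R)) ->
  forall est : forall n : nat, {set {set 'I_n}} -> {set 'I_n},
    (forall n G, #|est n G| = K n) ->
    (fun n => overlap lam (Ga n) (est n) / (K n)%:R) @ \oo --> (0 : R).
Proof.
move=> l0 Gag hK _ hEL est hest.
apply/cvgrPdist_le => e e0.
have e20 : 0 < e / 2 by rewrite divr_gt0.
have e2 : 0 < e ^+ 2 / 2 by rewrite divr_gt0 // exprn_gt0.
move/cvgrPdist_le: hK => /(_ _ e20) hK'.
move/cvgrPdist_le: hEL => /(_ _ e2) hEL'.
near=> n.
have n0 : (0 < n)%N by near: n; exact: nbhs_infty_gt.
have hKn : `|0 - (K n)%:R / Num.sqrt (n%:R : R)| <= e / 2 by near: n.
have hEn : `|1 - EL2 lam n (Ga n)| <= e ^+ 2 / 2 by near: n.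
have pp0 := @pn_pos R lam n l0 n0.
have pp1 := @pn_le1 R lam n.
have ov0 := @overlap_ge0 R lam n (K n) (Ga n) (est n) l0 n0.
rewrite sub0r normrN ger0_norm; last by rewrite divr_ge0.
have [Kn0|Kn0] := eqVneq (K n) 0%N.
  have -> : (K n)%:R = 0 :> R by rewrite Kn0.
  by rewrite invr0 mulr0 ltW.
have [N0|N0] := eqVneq (ninj R (K n) n) 0.
  by rewrite /overlap N0 invr0 mul0r mul0r ltW.
have b := bound pp0 pp1 (Gag n) (hest n) e0 n0 N0.
set kk := (K n)%:R in b *.
have kk1 : 1 <= kk by rewrite /kk ler1n lt0n.
have kk0 : 0 < kk by apply: lt_le_trans kk1.
rewrite ler_pdivrMr //.
set a := kk / Num.sqrt (n%:R : R) in hKn.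
have a0 : 0 <= a by rewrite divr_ge0 ?ler0n ?sqrtr_ge0.
rewrite sub0r normrN ger0_norm // in hKn.
have ha : kk ^+ 2 / n%:R = a ^+ 2.
  by rewrite /a expr_div_n sqr_sqrtr // ler0n.
rewrite ha in b.
have a2 : a ^+ 2 <= e ^+ 2 / 4.
  have -> : e ^+ 2 / 4 = (e / 2) ^+ 2 by rewrite expr_div_n; congr (_ / _); rewrite expr2 -natrM.
  by rewrite lerXn2r // ?nnegrE // ltW.
have d : EL2 lam n (Ga n) - 1 <= e ^+ 2 / 2.
  by apply: le_trans hEn; rewrite -normrN opprB ler_norm.
have X : a ^+ 2 + kk * (EL2 lam n (Ga n) - 1) <= kk * e ^+ 2.
  have h1 : kk * (EL2 lam n (Ga n) - 1) <= kk * (e ^+ 2 / 2) by rewrite ler_wpM2l // ltW.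
  have h2 : e ^+ 2 / 4 <= kk * (e ^+ 2 / 2).
    rewrite -[X in X <= _]mul1r; apply: ler_pM => //.
      by rewrite divr_ge0 // exprn_ge0 // ltW.
    rewrite ler_pM2l ?exprn_gt0 // lef_pV2 ?posrE //; by rewrite ler_nat.
  have h3 : kk * (e ^+ 2 / 2) + kk * (e ^+ 2 / 2) = kk * e ^+ 2 by field.
  rewrite -h3; apply: lerD => //; exact: le_trans a2 h2.
apply: (le_trans b).
have c0 : 0 <= (2 * e)^-1 by rewrite invr_ge0 mulr_ge0 // ltW.
have := ler_wpM2l c0 X.
have -> : (2 * e)^-1 * (kk * e ^+ 2) = kk * e / 2.
  by field; rewrite lt0r_neq0.
move=> Y; have -> : e * kk = kk * e / 2 + kk * e / 2 by field.
by rewrite lerD2l.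
Unshelve. all: by end_near.
Qed.
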